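(* Let $m\ge1$ and work in $\Lambda^{\pm}_m=\mathbb Z[x_1^{\pm1},\dots,x_m^{\pm1}]^{S_m}$. (1) For every sequence of integers $\lambda=(\lambda_1,\dots,\lambda_m)$, $E_\lambda(x_1,\dots,x_m)=\det\big(H_{\lambda_i-i+j}\big)_{1\le i,j\le m}$. (2) For every sequence of integers $\lambda_1,\dots,\lambda_{m+1}$, $\det\big(H_{\lambda_i-i+j}\big)_{1\le i,j\le m+1}=0$ in $\Lambda^{\pm}_m$.
   Context: For a sequence of integers $\lambda=(\lambda_1,\dots,\lambda_m)$, $E_\lambda$ is defined by $E_\lambda(x)\prod_{i<j}(x_i-x_j)=\sum_{\sigma\in S_m}\mathrm{sgn}(\sigma)\sigma(x_1^{\lambda_1+m-1}x_2^{\lambda_2+m-2}\cdots x_m^{\lambda_m})$, and $H_k=E_{(k,0,\dots,0)}$ for $k\in\mathbb Z$. *)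

(* Defs.v *)
From HB Require Import structures.
From mathcomp Require Import all_boot all_order all_algebra all_fingroup.
From mathcomp Require Import fraction.
From mathcomp.multinomials Require Import mpoly.
Set Implicit Arguments. Unset Strict Implicit. Unset Printing Implicit Defensive.
Import Order.TTheory GRing.Theory Num.Theory.
Local Open Scope ring_scope.

(* The Laurent ring Z[x_1^{+-1},...,x_m^{+-1}] (and hence Lambda^{+-}_m) embeds
   injectively in the field of rational functions Q(x_1,...,x_m), realised as
   the fraction field of {mpoly int[m]}. *)
Definition RatFun (m : nat) := {fraction {mpoly int[m]}}.

Definition xv (m : nat) (i : 'I_m) : RatFun m :=
  @FracField.tofrac _ ('X_i : {mpoly int[m]}).

Definition alternant (m : nat) (a : 'I_m -> int) : RatFun m :=
  \sum_(s : 'S_m) (-1) ^+ s * \prod_(i : 'I_m) (xv (s i)) ^ (a i).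

Definition vandermonde (m : nat) : RatFun m :=
  \prod_(i : 'I_m) \prod_(j : 'I_m | (i < j)%N) (xv i - xv j).

(* E_lambda, the unique solution of E_lambda * vandermonde = alternant of
   (lambda_i + m - i) (1-based); 0-based exponent lambda_i + (m-1-i). *)
Definition E (m : nat) (lam : 'I_m -> int) : RatFun m :=
  alternant (fun i => lam i + ((m.-1 - i)%N)%:Z) / vandermonde m.

Definition H (m : nat) (k : int) : RatFun m :=
  E (fun i : 'I_m => if (i : nat) == 0%N then k else 0).

(* Main.v *)
Require Import Defs.
From HB Require Import structures.
From mathcomp Require Import all_boot all_order all_algebra all_fingroup.
From mathcomp Require Import fraction.
From mathcomp.multinomials Require Import mpoly.
From mathcomp Require Import zify.
Import Order.TTheory GRing.Theory Num.Theory.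
Set Implicit Arguments. Unset Strict Implicit. Unset Printing Implicit Defensive.
Local Open Scope ring_scope.

Lemma xv_neq0 m (i : 'I_m) : xv i != 0.
Proof.
rewrite /xv tofrac_eq0; apply/eqP => h.
have := congr1 (fun p => p@_U_(i)) h.
by rewrite /= mcoeffXU eqxx mcoeff0 => /eqP; rewrite oner_eq0.
Qed.

Lemma xvB_neq0 m (i j : 'I_m) : i != j -> xv i - xv j != 0.
Proof.
move=> ij; rewrite /xv -tofracB tofrac_eq0; apply/eqP => h.
have := congr1 (fun p => p@_U_(i)) h.
rewrite /= mcoeffB !mcoeffXU eqxx eq_sym (negbTE ij) subr0 mcoeff0 => /eqP.
by rewrite oner_eq0.
Qed.

Definition Pm m N (a : 'I_N -> int) : 'M[RatFun m]_(N, m) :=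
  \matrix_(i, l) xv l ^ a i.

Lemma alt_det m (a : 'I_m -> int) : alternant a = \det (Pm m a).
Proof.
rewrite /alternant /determinant; apply: eq_bigr => s _; congr (_ * _).
by apply: eq_bigr => i _; rewrite mxE.
Qed.

Definition revp n : 'S_n := perm (@rev_ord_inj n).

Lemma vander_alt m :
  vandermonde m = \det (Pm m (fun i : 'I_m => ((m.-1 - i)%N)%:Z)).
Proof.
set B := Vandermonde m (\row_l (xv (rev_ord l) : RatFun m)).
have -> : Pm m (fun i : 'I_m => ((m.-1 - i)%N)%:Z)
          = row_perm (revp m) (col_perm (revp m) B).
  apply/matrixP => i l; rewrite !mxE !permE rev_ordK /=.
  congr (_ ^+ _); rewrite -add1n subnDA subn1 //.
rewrite row_permE col_permE !det_mulmx !det_perm odd_permV mulrC -mulrA.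
rewrite -signr_addb addbb expr0 mulr1 det_Vandermonde.
rewrite /vandermonde !pair_big_dep.
rewrite (reindex_inj (h := fun p : 'I_m * 'I_m => (rev_ord p.2, rev_ord p.1))).
  apply: eq_big => [[a b]|p _] /=.
    have := ltn_ord a; have := ltn_ord b; move=> h1 h2.
    by apply/idP/idP; lia.
  by rewrite !mxE.
move=> [a b] [c d] /= h.
have h1 := congr1 (@rev_ord m \o fst) h.
have h2 := congr1 (@rev_ord m \o snd) h.
by move: h1 h2; rewrite /= !rev_ordK => -> ->.
Qed.

Lemma vander_neq0 m : vandermonde m != 0.
Proof.
apply/prodf_neq0 => i _; apply/prodf_neq0 => j ij.
by apply: xvB_neq0; rewrite neq_ltn ij.
Qed.

Definition cvec n (l : 'I_n.+1) : RatFun n.+1 :=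
  cofactor (Pm n.+1 (fun i : 'I_n.+1 =>
     (if (i : nat) == 0%N then (0:int) else 0) + ((n.+1).-1 - i)%N%:Z)) ord0 l
  / vandermonde n.+1.

Lemma H_sum n (k : int) :
  H n.+1 k = \sum_l xv l ^ (k + n%:Z) * cvec l.
Proof.
rewrite /H /E alt_det (expand_det_row _ ord0) mulr_suml.
apply: eq_bigr => l _; rewrite /cvec /cofactor !mulrA; congr (_ * _ * _ * _).
  by rewrite mxE /= subn0.
congr (\det _); apply/matrixP => i j; rewrite !mxE.
by rewrite lift0.
Qed.

Definition Qm n N : 'M[RatFun n.+1]_(n.+1, N) :=
  \matrix_(l, j) (xv l ^ ((j : nat)%:Z) * cvec l).

Lemma Mfact n N (lam : 'I_N -> int) :
  \matrix_(i < N, j < N) H n.+1 (lam i - (i : nat)%:Z + (j : nat)%:Z)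
  = Pm n.+1 (fun i => lam i - (i : nat)%:Z + n%:Z) *m Qm n N.
Proof.
apply/matrixP => i j; rewrite !mxE H_sum; apply: eq_bigr => l _.
rewrite !mxE /cvec !mulrA -expfzDr ?xv_neq0 //.
by rewrite [lam i - _ + _ + _]addrAC.
Qed.

Lemma H0 n : H n.+1 0 = 1.
Proof.
rewrite /H /E alt_det.
suff -> : Pm n.+1 (fun i : 'I_n.+1 => (if (i : nat) == 0%N then (0:int) else 0)
             + ((n.+1).-1 - i)%N%:Z) = Pm n.+1 (fun i : 'I_n.+1 => ((n.+1).-1 - i)%N%:Z).
  by rewrite -vander_alt divff // vander_neq0.
by apply/matrixP => i l; rewrite !mxE; case: ifP; rewrite add0r.
Qed.

Lemma Hneg n (i j : nat) : (i < j <= n)%N ->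
  H n.+1 (0 - j%:Z + i%:Z) = 0.
Proof.
move=> /andP [ij jn].
rewrite /H /E alt_det.
have hr : (j - i < n.+1)%N by lia.
rewrite (@determinant_alternate _ _ _ ord0 (@Ordinal _ _ hr)).
- by rewrite mul0r.
- by rewrite -val_eqE /=; lia.
move=> l; rewrite !mxE /=; congr (_ ^ _).
have -> : (j - i == 0)%N = false by lia.
rewrite subn0 add0r; lia.
Qed.

Lemma detQ n : \det (Qm n n.+1) = (vandermonde n.+1)^-1.
Proof.
have h := Mfact n (fun _ : 'I_n.+1 => (0:int)).
have e1 : \det (\matrix_(i < n.+1, j < n.+1)
             H n.+1 (0 - (i : nat)%:Z + (j : nat)%:Z)) = 1.
  rewrite -det_tr det_trig.
    by rewrite big1 // => i _; rewrite !mxE subrK H0.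
  apply/is_trig_mxP => i j ij; rewrite !mxE.
  by apply: Hneg; rewrite ij /= -ltnS.
rewrite h det_mulmx in e1.
have e2 : Pm n.+1 (fun i : 'I_n.+1 => 0 - (i : nat)%:Z + n%:Z)
        = Pm n.+1 (fun i : 'I_n.+1 => ((n.+1).-1 - i)%N%:Z).
  apply/matrixP => i l; rewrite !mxE; congr (_ ^ _).
  have := ltn_ord i; lia.
rewrite e2 -vander_alt in e1.
apply: (mulfI (vander_neq0 n.+1)); rewrite e1 divff //; exact: vander_neq0.
Qed.

Lemma part1 n (lam : 'I_n.+1 -> int) :
  E lam = \det (\matrix_(i < n.+1, j < n.+1)
                     H n.+1 (lam i - ((i : nat))%:Z + ((j : nat))%:Z)).
Proof.
rewrite Mfact det_mulmx detQ /E alt_det; congr (\det _ / _).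
apply/matrixP => i l; rewrite !mxE; congr (_ ^ _).
have := ltn_ord i; lia.
Qed.

Lemma part2 n (lam : 'I_n.+2 -> int) :
  \det (\matrix_(i < n.+2, j < n.+2)
             H n.+1 (lam i - ((i : nat))%:Z + ((j : nat))%:Z)) = 0.
Proof.
rewrite Mfact; apply/eqP; apply: contraT => hd.
have : (Pm n.+1 (fun i => lam i - (i : nat)%:Z + n%:Z) *m Qm n n.+2) \in unitmx.
  by rewrite unitmxE unitfE.
rewrite -row_free_unit /row_free => /eqP hr.
have := mulmx_max_rank (Pm n.+1 (fun i => lam i - (i : nat)%:Z + n%:Z)) (Qm n n.+2).
by rewrite hr ltnn.
Qed.

Theorem mainTheorem3 (m : nat) (hm : (1 <= m)%N) :
  (forall lam : 'I_m -> int,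
     E lam = \det (\matrix_(i < m, j < m)
                     H m (lam i - ((i : nat))%:Z + ((j : nat))%:Z)))
  /\
  (forall lam : 'I_m.+1 -> int,
     \det (\matrix_(i < m.+1, j < m.+1)
             H m (lam i - ((i : nat))%:Z + ((j : nat))%:Z)) = 0).
Proof.
case: m hm => [//|n] _; split; [exact: part1 | exact: part2].
Qed.
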